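(* Let $X$ take values in a finite set $\mathcal X$ with $\mathbb{P}(X=x)>0$ for all $x$, let $Y\in[M]$, $R\in\{0,1\}$, and let $F$ take values in a finite set $\mathcal F$. Assume $F$ is conditionally independent of $R$ given $(Y,X)$, and $\mathbb{P}(R=1\mid Y=y,X=x)>0$ for all $x,y$. For each $x$ define $\alpha_x(f,y)=\mathbb{P}(R=1,F=f,Y=y\mid X=x)$, $\beta_x(f)=\mathbb{P}(R=0,F=f\mid X=x)$, $A_x=[\alpha_x(f,y)]_{f\in\mathcal F,y\in[M]}$, $\boldsymbol\beta_x=(\beta_x(f))_{f\in\mathcal F}$, $D=\mathrm{diag}(1,2,\dots,M)$, and \[\Pi_x=\Big\{(\pi_x(y))_{y\in[M]}:\ \sum_{y=1}^M\alpha_x(f,y)\Big(\frac1{\pi_x(y)}-1\Big)=\beta_x(f)\ \forall f\in\mathcal F,\ \pi_x(y)\in(0,1]\Big\}.\] Let $\theta_{x,\min}$ and $\theta_{x,\max}$ be the minimum and maximum of $\mathbf 1^\top A_xD(\mathbf w_x+\mathbf 1)$ over $\mathbf w_x\in\mathbb{R}^M$ with $A_x\mathbf w_x=\boldsymbol\beta_x$, $\mathbf w_x\ge\mathbf 0$. Then the set \[\Theta=\Big\{\sum_{x\in\mathcal X}\mathbb{P}(X=x)\sum_{f\in\mathcal F}\sum_{y=1}^M y\,\frac{\alpha_x(f,y)}{\pi_x(y)}:\ (\pi_x)\in\Pi_x\ \forall x\Big\}\] equals $\big[\sum_x\theta_{x,\min}\mathbb{P}(X=x),\ \sum_x\theta_{x,\max}\mathbb{P}(X=x)\big]=:[\theta^{\mathrm{shad}}_{\min},\theta^{\mathrm{shad}}_{\max}]$.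 Moreover, if $A_x$ has full column rank for every $x\in\mathcal X$, then $\theta^{\mathrm{shad}}_{\min}=\theta^{\mathrm{shad}}_{\max}$ (point identification).
   Context: $\Theta$ is the identification set for $\theta=\mathbb{E}[Y]$ when $(X,F,R,RY)$ is observed and missingness may depend on $Y$; $\pi_x(y)$ plays the role of $\mathbb{P}(R=1\mid Y=y,X=x)$. Column vectors $\mathbf 1,\mathbf 0$ are all-ones and all-zeros vectors of appropriate dimension. *)

(* Defs.v *)
From HB Require Import structures.
From mathcomp Require Import all_boot all_order all_algebra.
From mathcomp Require Import boolp classical_sets reals.
Set Implicit Arguments. Unset Strict Implicit. Unset Printing Implicit Defensive.
Import Order.TTheory GRing.Theory Num.Theory.
Local Open Scope ring_scope.
Local Open Scope classical_set_scope.

(* A joint law of (X, F, R, Y) on the finite space X * F * bool * 'I_M.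
   The outcome value y in [M] = {1,..,M} is represented by j : 'I_M with
   y = j + 1 (see yval). R = 1 is encoded by true. *)
Section Shadow.
Variables (R : realType) (X F : finType) (M : nat).
Variable P : X -> F -> bool -> 'I_M -> R.

Definition yval (j : 'I_M) : R := (j.+1)%:R.

Definition is_prob : Prop :=
  (forall x f r j, 0 <= P x f r j) /\
  \sum_x \sum_f \sum_r \sum_j P x f r j = 1.

Definition PX (x : X) : R := \sum_f \sum_r \sum_j P x f r j.
Definition PXY (x : X) (j : 'I_M) : R := \sum_f \sum_r P x f r j.
Definition PXFY (x : X) (f : F) (j : 'I_M) : R := \sum_r P x f r j.
Definition PXRY (x : X) (r : bool) (j : 'I_M) : R := \sum_f P x f r j.

Definition cond_indep_F_R : Prop :=
  forall x f r j, P x f r j * PXY x j = PXFY x f j * PXRY x r j.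

Definition prop_score (x : X) (j : 'I_M) : R := PXRY x true j / PXY x j.

Definition alpha (x : X) (f : F) (j : 'I_M) : R := P x f true j / PX x.
Definition beta (x : X) (f : F) : R := (\sum_j P x f false j) / PX x.

Definition Amx (x : X) : 'M[R]_(#|F|, M) :=
  \matrix_(i < #|F|, j < M) alpha x (enum_val i) j.
Definition betav (x : X) : 'cV[R]_#|F| := \col_(i < #|F|) beta x (enum_val i).
Definition Dmx : 'M[R]_M := diag_mx (\row_(j < M) yval j).

Definition Pi (x : X) : set ('I_M -> R) :=
  [set pi | (forall f, \sum_j alpha x f j * (1 / pi j - 1) = beta x f) /\
            (forall j, 0 < pi j <= 1)].

Definition lp_obj (x : X) (w : 'cV[R]_M) : R :=
  ((const_mx 1 : 'rV[R]_#|F|) *m Amx x *m Dmx *m (w + const_mx 1)) ord0 ord0.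

Definition lp_values (x : X) : set R :=
  [set v | exists w : 'cV[R]_M,
     Amx x *m w = betav x /\ (forall j, 0 <= w j ord0) /\ v = lp_obj x w].

Definition theta_min (x : X) : R := inf (lp_values x).
Definition theta_max (x : X) : R := sup (lp_values x).

Definition theta_shad_min : R := \sum_x theta_min x * PX x.
Definition theta_shad_max : R := \sum_x theta_max x * PX x.

Definition Theta : set R :=
  [set t | exists pi : X -> 'I_M -> R, (forall x, Pi x (pi x)) /\
     t = \sum_x PX x * \sum_f \sum_j yval j * (alpha x f j / pi x j)].

End Shadow.

(* Main.v *)
Require Import Defs.
From HB Require Import structures.
From mathcomp Require Import all_boot all_order all_algebra.
From mathcomp Require Import boolp classical_sets reals.
From mathcomp Require Import all_classical all_reals all_analysis.
Import Order.TTheory GRing.Theory Num.Theory.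
Import numFieldNormedType.Exports.
From mathcomp Require Import ring lra.
Local Open Scope ring_scope.
Local Open Scope classical_set_scope.

Lemma sum_lin_cont (R : realType) n (c : 'I_n -> R) :
  continuous (fun v : 'rV[R]_n => \sum_j c j * v ord0 j).
Proof.
suff H : forall r : seq 'I_n, continuous (fun v : 'rV[R]_n => \sum_(j <- r) c j * v ord0 j).
  exact: H.
elim => [|j r IH].
  under eq_fun do rewrite big_nil; exact: cst_continuous.
under eq_fun do rewrite big_cons.
move=> v.
have h1 : {for v, continuous (fun v : 'rV[R]_n => c j * v ord0 j)}.
  exact: (@continuousM R _ (fun=> c j) (fun v : 'rV[R]_n => v ord0 j) v (@cst_continuous _ _ _ v) (@coord_continuous _ _ _ _ _ v)).
exact: (@continuousD R R^o _ _ _ v h1 (IH v)).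
Qed.

Lemma attain (R : realType) n (S : set 'rV[R]_n) (g : 'rV[R]_n -> R) (B : R) :
  S !=set0 -> closed S -> (forall v, S v -> forall j, 0 <= v ord0 j <= B) ->
  continuous g ->
  exists a b, [/\ S a, S b & forall v, S v -> g a <= g v <= g b].
Proof.
move=> S0 cS bS cg.
have cpS : compact S.
  apply: (subclosed_compact cS (@rV_compact _ _ (fun=> `[0, B]%classic) _)).
    by move=> _; exact: segment_compact.
  by move=> v Sv i /=; rewrite in_itv /= bS.
have wc : {within S, continuous g} by exact: continuous_subspaceT.
have [a aS ha] := compact_EVT_min S0 cpS wc.
have [b bS2 hb] := compact_EVT_max S0 cpS wc.
exists a, b; split; [exact/set_mem|exact/set_mem|].
by move=> v Sv; rewrite ha ?hb //; exact/mem_set.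
Qed.

Lemma single_le_sum (R : realType) (I : finType) (g : I -> R) (i0 : I) :
  (forall i, 0 <= g i) -> g i0 <= \sum_i g i.
Proof.
move=> g0; rewrite (bigD1 i0) //= lerDl; exact: sumr_ge0.
Qed.

Arguments attain {R n S g B} _ _ _ _.
Arguments single_le_sum {R I} g i0 _.

Section Main.
Variables (R : realType) (X F : finType) (M : nat) (P : X -> F -> bool -> 'I_M -> R).
Hypotheses (Hp : is_prob P) (HPX : forall x, 0 < PX P x) (Hci : cond_indep_F_R P)
  (Hps : forall x j, 0 < prop_score P x j).

Definition feas x (w : 'cV[R]_M) :=
  Amx P x *m w = betav P x /\ forall j, 0 <= w j ord0.
Definition cc x j := (\sum_f alpha P x f j) * yval R j.
Definition val x (pi : 'I_M -> R) := \sum_f \sum_j yval R j * (alpha P x f j / pi j).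

Lemma P_ge0 x f r j : 0 <= P x f r j.
Proof. by case: Hp => h _; exact: h. Qed.

Lemma PXY_gt0 x j : 0 < PXY P x j.
Proof.
have h0 : PXY P x j != 0.
  by apply/eqP => e; move: (Hps x j); rewrite /prop_score e invr0 mulr0 ltxx.
rewrite lt_def h0 /=; apply: sumr_ge0 => f _; apply: sumr_ge0 => r _; exact: P_ge0.
Qed.

Lemma PXRYt_gt0 x j : 0 < PXRY P x true j.
Proof.
have h := Hps x j; rewrite /prop_score in h.
have e : PXRY P x true j = PXRY P x true j / PXY P x j * PXY P x j.
  by rewrite divfK // gt_eqF // PXY_gt0.
by rewrite e mulr_gt0 // PXY_gt0.
Qed.

Lemma PXY_split x j : PXY P x j = PXRY P x true j + PXRY P x false j.
Proof. by rewrite /PXY exchange_big big_bool. Qed.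

Lemma sum_enum (g : F -> R) : \sum_(i < #|F|) g (enum_val i) = \sum_f g f.
Proof. by rewrite -(big_enum_val (A := F)). Qed.

Lemma colsum_gt0 x j : 0 < \sum_f alpha P x f j.
Proof.
rewrite /alpha -mulr_suml; apply: divr_gt0; last exact: HPX.
exact: PXRYt_gt0.
Qed.

Lemma objE x w : lp_obj P x w = \sum_j cc x j * (w j ord0 + 1).
Proof.
rewrite /lp_obj /Dmx mul_mx_diag [LHS]mxE; apply: eq_bigr => j _.
rewrite mxE [(w + _) _ _]mxE [const_mx 1 _ _]mxE /cc; congr (_ * _).
rewrite mxE; congr (_ * _); last by rewrite mxE.
rewrite -sum_enum; apply: eq_bigr => i _.
by rewrite !mxE mul1r.
Qed.

Lemma feasE x w : feas x w <->
  (forall f, \sum_j alpha P x f j * w j ord0 = beta P x f) /\ (forall j, 0 <= w j ord0).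
Proof.
split => -[h1 h2]; split => //.
  move=> f; have := congr1 (fun A : 'cV[R]_#|F| => A (enum_rank f) ord0) h1.
  rewrite /= !mxE enum_rankK => <-; apply: eq_bigr => j _; by rewrite !mxE enum_rankK.
apply/matrixP => i k; rewrite [k]ord1 !mxE -h1; apply: eq_bigr => j _; by rewrite mxE.
Qed.


Lemma valE x (pi : 'I_M -> R) (w : 'cV[R]_M) : (forall j, w j ord0 + 1 = 1 / pi j) ->
  val x pi = lp_obj P x w.
Proof.
move=> hw; rewrite objE /val exchange_big; apply: eq_bigr => j _.
rewrite /cc hw mulr_suml mulr_suml; apply: eq_bigr => f _.
by rewrite div1r mulrA [yval R j * _]mulrC.
Qed.

Definition wof (pi : 'I_M -> R) : 'cV[R]_M := \col_j (1 / pi j - 1).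
Definition piof (w : 'cV[R]_M) : 'I_M -> R := fun j => 1 / (w j ord0 + 1).

Lemma Pi_feas x pi : Pi P x pi -> feas x (wof pi).
Proof.
move=> [h1 h2]; apply/feasE; split.
  move=> f; rewrite -h1; apply: eq_bigr => j _; by rewrite mxE.
move=> j; rewrite mxE subr_ge0 div1r; have /andP[p0 p1] := h2 j.
by rewrite invf_ge1.
Qed.

Lemma wof_val x pi : Pi P x pi -> val x pi = lp_obj P x (wof pi).
Proof. move=> _; apply: valE => j; by rewrite mxE subrK. Qed.

Lemma feas_Pi x w : feas x w -> Pi P x (piof w).
Proof.
move=> /feasE [h1 h2]; have gt0 j : 0 < w j ord0 + 1.
  by apply: (le_lt_trans (h2 j)); rewrite ltrDl.
split.
  move=> f; rewrite -h1; apply: eq_bigr => j _.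
  by rewrite /piof !div1r invrK addrK.
move=> j; rewrite /piof div1r invr_gt0 gt0 /= invf_le1 // lerDr; exact: h2.
Qed.

Lemma piof_val x w : feas x w -> val x (piof w) = lp_obj P x w.
Proof. move=> _; apply: valE => j; by rewrite /piof !div1r invrK. Qed.

Lemma feas_nonempty x : exists w, feas x w.
Proof.
exists (\col_j (PXRY P x false j / PXRY P x true j)); apply/feasE; split; last first.
  move=> j; rewrite mxE; apply: divr_ge0; apply: sumr_ge0 => f _; exact: P_ge0.
move=> f; rewrite /beta mulr_suml; apply: eq_bigr => j _.
rewrite mxE /alpha.
have Rt := PXRYt_gt0 x j; have Y0 := PXY_gt0 x j.
have e1 := Hci x f true j; have e2 := Hci x f false j.
have hPX := HPX x.
have key : P x f true j * (PXRY P x false j / PXRY P x true j) = P x f false j.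
  apply: (mulIf (lt0r_neq0 Y0)).
  rewrite e2 mulrAC e1.
  by field; rewrite lt0r_neq0.
rewrite -key; by field; rewrite ?lt0r_neq0.
Qed.

Lemma feas_bounded x : exists B : R, forall w, feas x w -> forall j, 0 <= w j ord0 <= B.
Proof.
pose Bs := \sum_f beta P x f.
exists (\sum_j Bs / \sum_f alpha P x f j) => w /feasE [h1 h2] j.
rewrite h2 /=.
have s0 := colsum_gt0 x j.
have ab0 f j' : 0 <= alpha P x f j'.
  by rewrite /alpha divr_ge0 ?P_ge0 // ltW.
have Bs0 : 0 <= Bs.
  rewrite /Bs -(eq_bigr _ (fun f _ => h1 f)); apply: sumr_ge0 => f _.
  by apply: sumr_ge0 => k _; rewrite mulr_ge0.
apply: (@le_trans _ _ (Bs / \sum_f alpha P x f j)); last first.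
  apply: (single_le_sum (fun k => Bs / \sum_f alpha P x f k) j).
  by move=> k; rewrite divr_ge0 // ltW // colsum_gt0.
rewrite ler_pdivlMr // /Bs -(eq_bigr _ (fun f _ => h1 f)) exchange_big /=.
apply: (@le_trans _ _ ((\sum_f alpha P x f j) * w j ord0)).
  by rewrite mulrC.
rewrite (eq_bigr (fun k => (\sum_f alpha P x f k) * w k ord0)); last by move=> k _; rewrite mulr_suml.
apply: (single_le_sum (fun k => (\sum_f alpha P x f k) * w k ord0) j) => k.
  by rewrite mulr_ge0 // sumr_ge0.
Qed.

Lemma objg x w : lp_obj P x w = \sum_j cc x j * (w^T) ord0 j + \sum_j cc x j.
Proof.
rewrite objE -big_split /=; apply: eq_bigr => j _; by rewrite mxE mulrDr mulr1.
Qed.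

Lemma opt x : exists p : 'cV[R]_M * 'cV[R]_M,
  [/\ feas x p.1, feas x p.2 &
   forall w, feas x w -> lp_obj P x p.1 <= lp_obj P x w <= lp_obj P x p.2].
Proof.
have [w0 hw0] := feas_nonempty x; have [B hB] := feas_bounded x.
pose S := [set v : 'rV[R]_M | feas x v^T].
have SE : S = \bigcap_(i in [set: 'I_#|F|])
     [set v : 'rV[R]_M | \sum_j Amx P x i j * v ord0 j = betav P x i ord0] `&`
   \bigcap_(j in [set: 'I_M]) [set v : 'rV[R]_M | 0 <= v ord0 j].
  apply/seteqP; split => v.
    move=> [h1 h2]; split => [i _ | j _] /=.
      have := congr1 (fun A : 'cV[R]_#|F| => A i ord0) h1; rewrite /= mxE => <-.
      by apply: eq_bigr => j _; rewrite [v^T _ _]mxE.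
    by have := h2 j; rewrite mxE.
  move=> [h1 h2]; split.
    apply/matrixP => i k; rewrite [k]ord1 mxE -(h1 i I); apply: eq_bigr => j _.
    by rewrite [v^T _ _]mxE.
  by move=> j; rewrite mxE; exact: (h2 j I).
have cS : closed S.
  rewrite SE; apply: closedI; apply: closed_bigI => i _.
    have := (@preimage_closed _ R (fun v : 'rV[R]_M => \sum_j Amx P x i j * v ord0 j)
      [set y | y = betav P x i ord0]).
    apply; last exact: closed_eq.
    move=> v _; exact: (sum_lin_cont R M (fun j => Amx P x i j) v).
  have := (@preimage_closed _ R (fun v : 'rV[R]_M => v ord0 i) [set y | 0 <= y]).
  apply; last exact: closed_ge.
  move=> v _; exact: (@coord_continuous _ _ _ _ _ v).
have S0 : S !=set0 by exists w0^T; rewrite /S /= trmxK.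
have bS : forall v, S v -> forall j, 0 <= v ord0 j <= B.
  by move=> v Sv j; have := hB _ Sv j; rewrite mxE.
have [a [b [Sa Sb hab]]] := attain S0 cS bS (sum_lin_cont R M (cc x)).
exists (a^T, b^T); split => //= w fw.
have Sw : S w^T by rewrite /S /= trmxK.
by rewrite !objg !trmxK !lerD2r; exact: hab.
Qed.

Lemma thetaE x (p : 'cV[R]_M * 'cV[R]_M) :
  [/\ feas x p.1, feas x p.2 &
   forall w, feas x w -> lp_obj P x p.1 <= lp_obj P x w <= lp_obj P x p.2] ->
  theta_min P x = lp_obj P x p.1 /\ theta_max P x = lp_obj P x p.2.
Proof.
move=> [[h11 h12] [h21 h22] hw].
have inE' w : feas x w -> lp_values P x (lp_obj P x w).
  by move=> [e1 e2]; exists w.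
have lvE v : lp_values P x v -> exists2 w, feas x w & v = lp_obj P x w.
  by move=> [w [e1 [e2 ->]]]; exists w.
have ne : lp_values P x !=set0 by exists (lp_obj P x p.1); apply: inE'.
split.
  apply/eqP; rewrite eq_le; apply/andP; split.
    by apply: (ge_inf _ (inE' _ (conj h11 h12))); exists (lp_obj P x p.1) => v /lvE [w fw ->]; case/andP: (hw w fw).
  rewrite /theta_min. apply: (lb_le_inf ne). by move=> v /lvE [w fw ->]; case/andP: (hw w fw).
apply/eqP; rewrite eq_le; apply/andP; split.
  by rewrite /theta_max; apply: (ge_sup ne) => v /lvE [w fw ->]; case/andP: (hw w fw).
rewrite /theta_max; apply: (sup_upper_bound _ (inE' _ (conj h21 h22))); split => //.
by exists (lp_obj P x p.2) => v /lvE [w fw ->]; case/andP: (hw w fw).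
Qed.

Lemma main_sec :
  Theta P = [set t | theta_shad_min P <= t <= theta_shad_max P] /\
  ((forall x, \rank (Amx P x) = M) -> theta_shad_min P = theta_shad_max P).
Proof.
have [W HW] := boolp.choice opt.
have TE x := thetaE x (W x) (HW x).
have smin : theta_shad_min P = \sum_x lp_obj P x (W x).1 * PX P x.
  by apply: eq_bigr => x _; rewrite (TE x).1.
have smax : theta_shad_max P = \sum_x lp_obj P x (W x).2 * PX P x.
  by apply: eq_bigr => x _; rewrite (TE x).2.
split; last first.
  move=> hr; rewrite smin smax; apply: eq_bigr => x _; congr (_ * _).
  have [[h11 _] [h21 _] _] := HW x.
  have rf : row_free (Amx P x)^T by rewrite /row_free mxrank_tr hr.
  congr (lp_obj P x _); apply: trmx_inj; apply: (row_free_inj rf).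
  by rewrite /= -!trmx_mul h11 h21.
apply/seteqP; split => t.
  move=> [pi [hpi ->]] /=; rewrite smin smax.
  have hv x := (let: And3 _ _ hb := HW x in hb) _ (Pi_feas x (pi x) (hpi x)).
  apply/andP; split; apply: ler_sum => x _.
    rewrite [X in X <= _]mulrC; apply: ler_wpM2l; first exact: ltW (HPX x).
    by have := hv x; rewrite -(wof_val x (pi x) (hpi x)) => /andP [].
  rewrite [X in _ <= X]mulrC; apply: ler_wpM2l; first exact: ltW (HPX x).
  by have := hv x; rewrite -(wof_val x (pi x) (hpi x)) => /andP [].
rewrite /= smin smax; set a := \sum_x _; set b := \sum_x _ => /andP [ha hb].
pose lam := if a < b then (t - a) / (b - a) else 0.
have lam01 : 0 <= lam <= 1.
  rewrite /lam; case: ifP => hlt; last by rewrite lexx ler01.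
  have bp : 0 < b - a by rewrite subr_gt0.
  apply/andP; split; first by rewrite divr_ge0 // ?subr_ge0 // ltW.
  by rewrite ler_pdivrMr // mul1r lerD2r.
have tE : t = (1 - lam) * a + lam * b.
  rewrite /lam; case: ifP => hlt.
    have bp : b - a != 0 by rewrite subr_eq0 gt_eqF.
    by field.
  rewrite subr0 mul1r mul0r addr0; apply/eqP; rewrite eq_le ha andbT.
  by apply: (le_trans hb); rewrite leNgt hlt.
have [l0 l1] : 0 <= lam /\ 0 <= 1 - lam by case/andP: lam01 => -> h; rewrite subr_ge0.
pose w x := (1 - lam) *: (W x).1 + lam *: (W x).2.
have fw x : feas x (w x).
  have [[h11 h12] [h21 h22] _] := HW x.
  split.
    by rewrite mulmxDr -!scalemxAr h11 h21 -scalerDl subrK scale1r.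
  by move=> j; rewrite !mxE addr_ge0 // mulr_ge0.
exists (fun x => piof (w x)); split; first by move=> x; exact: feas_Pi x (w x) (fw x).
transitivity (\sum_x PX P x * lp_obj P x (w x)); last first.
  by apply: eq_bigr => x _; congr (_ * _); exact: (esym (piof_val x (w x) (fw x))).
have lw x : lp_obj P x (w x) = (1 - lam) * lp_obj P x (W x).1 + lam * lp_obj P x (W x).2.
  rewrite !objE !mulr_sumr -big_split; apply: eq_bigr => j _.
  rewrite !mxE /=; ring.
rewrite tE /a /b !mulr_sumr -big_split; apply: eq_bigr => x _.
rewrite lw /=; ring.
Qed.
End Main.

Theorem proposition4 (R : realType) (X F : finType) (M : nat)
    (P : X -> F -> bool -> 'I_M -> R) :
  is_prob P ->
  (forall x, 0 < PX P x) ->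
  cond_indep_F_R P ->
  (forall x j, 0 < prop_score P x j) ->
  Theta P = [set t | theta_shad_min P <= t <= theta_shad_max P] /\
  ((forall x, \rank (Amx P x) = M) -> theta_shad_min P = theta_shad_max P).
Proof. move=> h1 h2 h3 h4; exact: main_sec. Qed.
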